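(* Let $n\ge1$ and let $H:[0,\infty)^n\to[0,\infty)$ be continuous, non-decreasing and bounded from above by the minimum, i.e. $H(x_1,\dots,x_n)\le\min(x_1,\dots,x_n)$. Let $\omega_j,\xi_j\in(0,\infty)$, $j=0,1,\dots,n$, be such that $x^{1/(\xi_0\omega_0)}\le x\le x^{1/(\xi_i\omega_i)}$ and $x\ge x^{\omega_i/\omega_0}$ for all $x\in[0,\infty)$ and $i=1,\dots,n$. Then for every measurable space $(X,\mathcal{A})$, every comonotone system $f_1,\dots,f_n\in\mathcal{F}^{(X,\mathcal{A})}$ and every monotone measure $m\in\mathcal{M}^{(X,\mathcal{A})}$ with $\mathbf{Su}(m,f_i^{\xi_i})<\infty$ for $i=1,\dots,n$, \[ \big[\mathbf{Su}\big(m,(H(f_1,\dots,f_n))^{\xi_0}\big)\big]^{\omega_0}\ \ge\ H\Big[\big(\mathbf{Su}(m,f_1^{\xi_1})\big)^{\omega_1},\dots,\big(\mathbf{Su}(m,f_n^{\xi_n})\big)^{\omega_n}\Big]. \]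
   Context: A monotone measure on $(X,\mathcal{A})$ is $m:\mathcal{A}\to[0,\infty]$ with $m(\emptyset)=0$, $m(X)>0$, $m(A)\le m(B)$ for $A\subseteq B$; $\mathcal{M}^{(X,\mathcal{A})}$ is the set of these; $\mathcal{F}^{(X,\mathcal{A})}$ the set of $\mathcal{A}$-measurable $f:X\to[0,\infty]$. The Sugeno integral is $\mathbf{Su}(m,f)=\sup\{\min(t,m(\{f\ge t\})) : t\in(0,\infty]\}$. A comonotone system is a family of pairwise comonotone functions: $(f_i(x)-f_i(y))(f_j(x)-f_j(y))\ge0$ for all $x,y\in X$. *)

(* Defs.v *)
From HB Require Import structures.
From mathcomp Require Import all_boot all_order all_algebra.
From mathcomp Require Import all_classical all_reals all_analysis.
From mathcomp Require Import measurable_realfun lebesgue_measure.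
Set Implicit Arguments. Unset Strict Implicit. Unset Printing Implicit Defensive.
Import Order.TTheory GRing.Theory Num.Theory.
Import numFieldNormedType.Exports.
Local Open Scope classical_set_scope.
Local Open Scope ring_scope.

Definition monotone_measure (d : measure_display) (T : measurableType d)
  (R : realType) (m : set T -> \bar R) : Prop :=
  [/\ m set0 = 0%E, (0 < m setT)%E &
      forall A B, measurable A -> measurable B -> A `<=` B -> (m A <= m B)%E].

Definition nnmeasurable (d : measure_display) (T : measurableType d)
  (R : realType) (f : T -> \bar R) : Prop :=
  measurable_fun setT f /\ forall x, (0 <= f x)%E.

Definition Sugeno (d : measure_display) (T : measurableType d)
  (R : realType) (m : set T -> \bar R) (f : T -> \bar R) : \bar R :=
  ereal_sup [set Order.min t (m [set x | (t <= f x)%E]) |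
             t in [set t : \bar R | (0 < t)%E]].

(* comonotone system: (f_i x - f_i y)(f_j x - f_j y) >= 0 for all x, y,
   i.e. never f_i x < f_i y while f_j y < f_j x (order form, well defined
   for [0,+oo]-valued functions). *)
Definition comonotone_system (T : Type) (R : realType) (n : nat)
  (f : 'I_n -> T -> \bar R) : Prop :=
  forall i j x y, ~ ((f i x < f i y)%E /\ (f j y < f j x)%E).

(* Extension of H : [0,oo)^n -> [0,oo) to [0,oo]^n by monotone limit:
   Hbar(x) = sup_k H(min(x_1,k),...,min(x_n,k)).  Agrees with H on finite
   arguments when H is non-decreasing. *)
Definition Hext (R : realType) (n : nat) (H : 'rV[R]_n -> R)
  (x : 'I_n -> \bar R) : \bar R :=
  ereal_sup (range (fun k : nat =>
    (H (\row_i fine (Order.min (x i) (k%:R)%:E)))%:E)).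

(* Main.v *)
Require Import Defs.
From HB Require Import structures.
From mathcomp Require Import all_boot all_order all_algebra.
From mathcomp Require Import all_classical all_reals all_analysis.
From mathcomp Require Import measurable_realfun lebesgue_measure.
Import Order.TTheory GRing.Theory Num.Theory.
Import numFieldNormedType.Exports.
Local Open Scope classical_set_scope.
Local Open Scope ring_scope.
From mathcomp Require Import lra.
Set Implicit Arguments. Unset Strict Implicit. Unset Printing Implicit Defensive.

Lemma ln_pow_le (R : realType) (x a : R) : 0 < x -> x `^ a <= x -> a * ln x <= ln x.
Proof.
by move=> x0 h; rewrite -ln_powR ler_ln ?posrE ?powR_gt0.
Qed.

Lemma ln_pow_ge (R : realType) (x a : R) : 0 < x -> x <= x `^ a -> ln x <= a * ln x.
Proof.
by move=> x0 h; rewrite -ln_powR ler_ln ?posrE ?powR_gt0.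
Qed.

Lemma half_01 (R : realType) : 0 < (2^-1 : R) < 1.
Proof. by rewrite invr_gt0 invf_lt1 //; lra. Qed.

Lemma expo_le_eq1 (R : realType) (a : R) :
  (forall x : R, 0 <= x -> x `^ a <= x) -> a = 1.
Proof.
move=> h.
have l2 : 0 < ln (2 : R) by apply: ln_gt0; lra.
have l12 : ln (2^-1 : R) < 0 by apply: ln_lt0; exact: half_01.
have /andP[hp _] := half_01 R.
have two0 : (0:R) < 2 by lra.
have h2 := @ln_pow_le R 2 a two0 (h 2 (ltW two0)).
have h12 := @ln_pow_le R (2^-1) a hp (h (2^-1) (ltW hp)).
apply/eqP; rewrite eq_le; apply/andP; split; nra.
Qed.

Lemma expo_ge_eq1 (R : realType) (a : R) :
  (forall x : R, 0 <= x -> x <= x `^ a) -> a = 1.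
Proof.
move=> h.
have l2 : 0 < ln (2 : R) by apply: ln_gt0; lra.
have l12 : ln (2^-1 : R) < 0 by apply: ln_lt0; exact: half_01.
have /andP[hp _] := half_01 R.
have two0 : (0:R) < 2 by lra.
have h2 := @ln_pow_ge R 2 a two0 (h 2 (ltW two0)).
have h12 := @ln_pow_ge R (2^-1) a hp (h (2^-1) (ltW hp)).
apply/eqP; rewrite eq_le; apply/andP; split; nra.
Qed.

Lemma chainP (R : realType) (T : Type) n (f : 'I_n -> T -> \bar R) :
  comonotone_system f -> forall x y,
  (forall i, (f i x <= f i y)%E) \/ (forall i, (f i y <= f i x)%E).
Proof.
move=> C x y; case: (pselect (forall i, (f i x <= f i y)%E)) => [h|h]; [by left|right].
have [i hi] : exists i, (f i y < f i x)%E.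
  apply: contrapT => hne; apply: h => i; rewrite leNgt; apply/negP => hlt.
  by apply: hne; exists i.
move=> j; rewrite leNgt; apply/negP => hj.
exact: (C i j y x (conj hi hj)).
Qed.

Definition upc (R : realType) (T : Type) n (f : 'I_n -> T -> \bar R) (P : T -> Prop) :=
  forall x y, P x -> (forall i, (f i x <= f i y)%E) -> P y.

Lemma upc_total (R : realType) (T : Type) n (f : 'I_n -> T -> \bar R) (A B : T -> Prop) :
  comonotone_system f -> upc f A -> upc f B ->
  (A `<=` B) \/ (B `<=` A).
Proof.
move=> C uA uB; case: (pselect (A `<=` B)) => hAB; [by left|right].
have [x [Ax nBx]] : exists x, A x /\ ~ B x.
  apply: contrapT => h; apply: hAB => x Ax; apply: contrapT => nB; apply: h; by exists x.
move=> y By; case: (chainP C x y) => h.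
- exact: uA Ax h.
- by exfalso; apply: nBx; exact: uB By h.
Qed.

Lemma chain_min (T : Type) n (A : 'I_n -> set T) (i0 : 'I_n) :
  (forall i j, A i `<=` A j \/ A j `<=` A i) -> exists k, forall i, A k `<=` A i.
Proof.
move=> tot.
suff: forall s : seq 'I_n, exists k, forall i, i \in s -> A k `<=` A i.
  by case/(_ (index_enum 'I_n)) => k hk; exists k => i; apply: hk; exact: mem_index_enum.
elim => [|a s [k hk]]; first by exists i0.
case: (tot a k) => h.
- exists a => i; rewrite inE => /orP[/eqP -> //| /hk]; exact: subset_trans h.
- by exists k => i; rewrite inE => /orP[/eqP -> //|/hk].
Qed.

Lemma upc_measurable (R : realType) (d : measure_display) (T : measurableType d) n
  (f : 'I_n -> T -> \bar R) (P : T -> Prop) :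
  (forall i, measurable_fun setT (f i)) -> comonotone_system f -> upc f P ->
  measurable [set x | P x].
Proof.
move=> mf C uP.
pose L i := ereal_sup [set f i x | x in [set x | ~ P x]].
pose E := \bigcap_(i in [set: 'I_n]) [set x | (L i <= f i x)%E].
pose F := \bigcap_(i in [set: 'I_n]) [set x | f i x = L i].
have mE : measurable E.
  apply: fin_bigcap_measurable; first exact: finite_finset.
  move=> i _.
  have -> : [set x | (L i <= f i x)%E] = setT `&` f i @^-1` `[L i, +oo[%classic.
    apply/seteqP; split => x /=; [move=> h; split => //; rewrite (@in_itv _ (\bar R)) /= h // | case=> _; by rewrite (@in_itv _ (\bar R)) /= andbT].
  by apply: mf => //; exact: emeasurable_itv.
have mF : measurable F.
  apply: fin_bigcap_measurable; first exact: finite_finset.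
  move=> i _.
  have -> : [set x | f i x = L i] = setT `&` f i @^-1` [set L i].
    by apply/seteqP; split => x /=; [move=> h; split | case].
  by apply: mf => //; exact: emeasurable_set1.
have PE : forall x, P x -> E x.
  move=> x Px i _ /=; apply: ge_ereal_sup => _ [w nPw <-].
  case: (chainP C x w) => h; last exact: h.
  by exfalso; apply: nPw; exact: uP Px h.
have EF : forall x, E x -> ~ F x -> P x.
  move=> x Ex nFx; apply: contrapT => nPx; apply: nFx => i _ /=.
  apply/eqP; rewrite eq_le (Ex i I) andbT.
  by apply: ereal_sup_ubound; exists x.
case: (pselect (exists z, P z /\ F z)) => [[z [Pz Fz]]|nz].
- have -> : [set x | P x] = E.
    apply/seteqP; split => x /=; first exact: PE.
    move=> Ex; case: (pselect (F x)) => Fx; last exact: EF.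
    apply: uP Pz _ => i; by rewrite (Fz i I) (Fx i I).
  exact: mE.
- have -> : [set x | P x] = E `\` F.
    apply/seteqP; split => x /=.
      by move=> Px; split; [exact: PE | move=> Fx; apply: nz; exists x].
    by case; exact: EF.
  exact: measurableD.
Qed.

Lemma sugeno_ge (R : realType) (d : measure_display) (T : measurableType d)
  (m : set T -> \bar R) (g : T -> \bar R) (t : \bar R) :
  (0 < t)%E -> (t <= m [set x | (t <= g x)%E])%E -> (t <= Sugeno m g)%E.
Proof.
move=> t0 h; apply: ereal_sup_ubound; exists t => //.
exact: min_l.
Qed.

Lemma sugeno_lt (R : realType) (d : measure_display) (T : measurableType d)
  (m : set T -> \bar R) (g : T -> \bar R) (r : \bar R) :
  (r < Sugeno m g)%E -> exists u, [/\ (0 < u)%E, (r < u)%E &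
     (r < m [set x | (u <= g x)%E])%E].
Proof.
move/ereal_sup_gt => [y [u u0 <-]]; rewrite lt_min => /andP[h1 h2].
by exists u.
Qed.

Lemma sugeno_ge0 (R : realType) (d : measure_display) (T : measurableType d)
  (m : set T -> \bar R) (g : T -> \bar R) :
  monotone_measure m -> measurable [set x | (1 <= g x)%E] -> (0 <= Sugeno m g)%E.
Proof.
move=> [m0 _ mm] meas.
apply: le_trans (_ : (Order.min 1 (m [set x | (1 <= g x)%E]) <= _)%E).
  rewrite le_min lee01 /= -m0; apply: mm; [exact: measurable0 | exact: meas | exact: sub0set].
apply: ereal_sup_ubound; exists 1%E => //=.
Qed.

Lemma poweR_mono (R : realType) (r : R) (x y : \bar R) :
  0 <= r -> (0 <= x)%E -> (x <= y)%E -> (x `^ r <= y `^ r)%E.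
Proof.
move=> r0 x0 xy; apply: gt0_ler_poweR => //; rewrite in_itv /= leey ?andbT //.
exact: le_trans xy.
Qed.

Lemma fine_min_ge0 (R : realType) (x : \bar R) (k : nat) :
  (0 <= x)%E -> 0 <= fine (Order.min x (k%:R)%:E).
Proof. move=> x0; apply: fine_ge0. by rewrite le_min x0 lee_fin /= ler0n. Qed.

Lemma fine_min_fin (R : realType) (x : \bar R) (k : nat) :
  (0 <= x)%E -> Order.min x (k%:R)%:E \is a fin_num.
Proof.
move=> x0; rewrite ge0_fin_numE; last by rewrite le_min x0 lee_fin /= ler0n.
apply: (@le_lt_trans _ _ (k%:R)%:E); first by rewrite ge_min lexx orbT.
by rewrite ltry.
Qed.

Lemma Hext_ge0 (R : realType) n (H : 'rV[R]_n -> R) (x : 'I_n -> \bar R) :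
  (forall y : 'rV[R]_n, (forall i, 0 <= y ord0 i) -> 0 <= H y) ->
  (forall i, (0 <= x i)%E) -> (0 <= Hext H x)%E.
Proof.
move=> Hge0 x0.
apply: (@le_trans _ _ (H (\row_i fine (Order.min (x i) ((0%N)%:R)%:E)))%:E).
  by rewrite lee_fin; apply: Hge0 => i; rewrite mxE; exact: fine_min_ge0.
by apply: ereal_sup_ubound; exists 0%N.
Qed.

Lemma Hext_mono (R : realType) n (H : 'rV[R]_n -> R) (x y : 'I_n -> \bar R) :
  (forall x y : 'rV[R]_n, (forall i, 0 <= x ord0 i) ->
     (forall i, x ord0 i <= y ord0 i) -> H x <= H y) ->
  (forall i, (0 <= x i)%E) -> (forall i, (x i <= y i)%E) ->
  (Hext H x <= Hext H y)%E.
Proof.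
move=> Hmono x0 xy; apply: ge_ereal_sup => _ [k _ <-].
apply: (@le_trans _ _ (H (\row_i fine (Order.min (y i) (k%:R)%:E)))%:E).
  rewrite lee_fin; apply: Hmono => i; rewrite !mxE; first exact: fine_min_ge0.
  apply: fine_le; [exact: fine_min_fin | exact: fine_min_fin (le_trans (x0 i) (xy i)) |].
  exact: le_min2 (xy i) (lexx _).
by apply: ereal_sup_ubound; exists k.
Qed.

Lemma Hext_lb (R : realType) n (H : 'rV[R]_n -> R) (x : 'I_n -> \bar R) (s : 'rV[R]_n) :
  (forall x y : 'rV[R]_n, (forall i, 0 <= x ord0 i) ->
     (forall i, x ord0 i <= y ord0 i) -> H x <= H y) ->
  (forall i, 0 <= s ord0 i) -> (forall i, ((s ord0 i)%:E <= x i)%E) ->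
  ((H s)%:E <= Hext H x)%E.
Proof.
move=> Hmono s0 sx.
pose K := Num.Def.archi_bound (\sum_j s ord0 j).
have sK : forall i, s ord0 i <= K%:R.
  move=> i; apply: (@le_trans _ _ (\sum_j s ord0 j)).
    by rewrite (bigD1 i) //= lerDl sumr_ge0.
  by apply/ltW/archi_boundP/sumr_ge0.
apply: (@le_trans _ _ (H (\row_i fine (Order.min (x i) (K%:R)%:E)))%:E).
  rewrite lee_fin; apply: Hmono => // i; rewrite mxE.
  have x0 : (0 <= x i)%E by apply: le_trans (sx i); rewrite lee_fin.
  rewrite -lee_fin fineK; last exact: fine_min_fin.
  by rewrite le_min sx lee_fin sK.
by apply: ereal_sup_ubound; exists K.
Qed.

Lemma cont_delta (R : realType) n (H : 'rV[R]_n -> R) (p : 'rV[R]_n) (tau : R) :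
  {within [set x : 'rV[R]_n | forall i, 0 <= x ord0 i], continuous H} ->
  (forall i, 0 <= p ord0 i) -> tau < H p ->
  exists2 e, 0 < e & forall y : 'rV[R]_n, (forall i, 0 <= y ord0 i) ->
    (forall i, `|p ord0 i - y ord0 i| < e) -> tau < H y.
Proof.
move=> /subspace_continuousP hc p0 lt.
have := cvgr_gt _ (hc p p0) _ lt.
move=> /(_ (within_filter _ _)).
rewrite /within /= => /nbhs_ballP [e e0 hb].
exists e => // y y0 hy; apply: hb => //.
by split => // i j; rewrite (ord1 i) /ball /=.
Qed.

Lemma ereal_ge_below (R : realType) (b : R) (S : \bar R) : 0 < b ->
  (forall t : R, 0 < t -> t < b -> (t%:E <= S)%E) -> (b%:E <= S)%E.
Proof.
move=> b0; case: S => [s| |] h.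
- rewrite lee_fin leNgt; apply/negP => sb.
  have [s0|s0] := ltP 0 s.
  + have h1 : 0 < (s + b) / 2 by lra.
    have h2 : (s + b) / 2 < b by lra.
    have := h _ h1 h2; rewrite lee_fin; lra.
  + have h1 : 0 < b / 2 by lra.
    have h2 : b / 2 < b by lra.
    have := h _ h1 h2; rewrite lee_fin; lra.
- by rewrite leey.
- have h1 : 0 < b / 2 by lra.
  have h2 : b / 2 < b by lra.
  by have := h _ h1 h2.
Qed.

Lemma main_uniform (R : realType) (n : nat) (H : 'rV[R]_n -> R) (w xi : R) (i0 : 'I_n) :
  (forall x : 'rV[R]_n, (forall i, 0 <= x ord0 i) -> 0 <= H x) ->
  {within [set x : 'rV[R]_n | forall i, 0 <= x ord0 i], continuous H} ->
  (forall x y : 'rV[R]_n, (forall i, 0 <= x ord0 i) ->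
     (forall i, x ord0 i <= y ord0 i) -> H x <= H y) ->
  (forall x : 'rV[R]_n, (forall i, 0 <= x ord0 i) ->
     forall i, H x <= x ord0 i) ->
  0 < w -> 0 < xi -> xi * w = 1 ->
  forall (d : measure_display) (T : measurableType d)
    (f : 'I_n -> T -> \bar R) (m : set T -> \bar R),
  (forall i, nnmeasurable (f i)) ->
  comonotone_system f ->
  monotone_measure m ->
  (forall i, (Sugeno m (fun x => (f i x `^ xi)%E) < +oo)%E) ->
  ((H (\row_i (fine (Sugeno m (fun x => (f i x `^ xi)%E))) `^ w))%:E
   <= (Sugeno m (fun x => ((Hext H (fun i => f i x)) `^ xi)%E)) `^ w)%E.
Proof.
move=> Hge0 Hcont Hmono Hmin w0 xi0 xw d T f m nnf C mm fin.
have mf i : measurable_fun setT (f i) := (nnf i).1.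
have f0 i x : (0 <= f i x)%E := (nnf i).2 x.
pose a i := Sugeno m (fun x => (f i x `^ xi)%E).
have upow i u : upc f (fun x => (u <= f i x `^ xi)%E).
  move=> x y h le; apply: le_trans h _; apply: poweR_mono; [exact: ltW | exact: f0 | exact: le].
have a0 i : (0 <= a i)%E.
  by apply: sugeno_ge0 => //; exact: upc_measurable mf C (upow i 1%E).
have afin i : a i = (fine (a i))%:E by rewrite fineK // ge0_fin_numE // fin.
pose al i := fine (a i).
have al0 i : 0 <= al i by apply: fine_ge0.
pose p := \row_i (al i `^ w).
change ((H p)%:E <= (Sugeno m (fun x => ((Hext H (fun i => f i x)) `^ xi)%E)) `^ w)%E.
pose c := H p.
have [c0|c0] := leP c 0.
  by apply: le_trans (poweR_ge0 _ _); rewrite lee_fin.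
have p0 i : 0 <= p ord0 i by rewrite mxE powR_ge0.
have cp i : c <= al i `^ w by have := Hmin p p0 i; rewrite mxE.
pose G x := ((Hext H (fun i => f i x)) `^ xi)%E.
have Gup t : upc f (fun x => (t <= G x)%E).
  move=> x y h le; apply: le_trans h _; apply: poweR_mono; first exact: ltW.
    by apply: Hext_ge0 => // i; exact: f0.
  by apply: Hext_mono => // i; exact: f0.
have key : forall t : R, 0 < t -> t < c `^ xi -> (t%:E <= Sugeno m G)%E.
  move=> t t0 tb.
  pose tau := t `^ w.
  have tau0 : 0 < tau by apply: powR_gt0.
  have tauc : tau < c.
    have -> : c = (c `^ xi) `^ w by rewrite -powRrM xw powRr1 // ltW.
    by apply: gt0_ltr_powR => //; rewrite nnegrE ?powR_ge0 // ltW.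
  have taut : tau `^ xi = t by rewrite /tau -powRrM (mulrC w xi) xw powRr1 // ltW.
  have [e e0 he] := cont_delta Hcont p0 tauc.
  pose eps := Num.min (e / 2) (c / 2).
  have eps0 : 0 < eps by rewrite lt_min; apply/andP; split; lra.
  have epse : eps <= e / 2 by rewrite ge_min lexx.
  have epsc : eps <= c / 2 by rewrite ge_min lexx orbT.
  pose s := \row_i (al i `^ w - eps).
  have s_lt i : s ord0 i < al i `^ w by rewrite mxE; lra.
  have s0 i : 0 <= s ord0 i by rewrite mxE; have := cp i; lra.
  have Hs : tau < H s.
    apply: he => // i; rewrite !mxE ger0_norm; lra.
  pose r i := s ord0 i `^ xi.
  have r_lt i : ((r i)%:E < a i)%E.
    rewrite afin lte_fin.
    have -> : fine (a i) = (al i `^ w) `^ xi by rewrite -powRrM (mulrC w xi) xw powRr1.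
    by apply: gt0_ltr_powR => //; rewrite nnegrE ?powR_ge0.
  have hu i : exists u, [/\ (0 < u)%E, ((r i)%:E < u)%E &
     ((r i)%:E < m [set x | (u <= f i x `^ xi)%E])%E].
    by apply: sugeno_lt; exact: r_lt.
  have [u hu'] := choice hu.
  pose A i := [set x | (u i <= f i x `^ xi)%E].
  have uA i : upc f (A i) := upow i (u i).
  have [k hk] := chain_min i0 (fun i j => upc_total C (uA i) (uA j)).
  have AU : A k `<=` [set x | (t%:E <= G x)%E].
    move=> x Akx.
    have sfx i : ((s ord0 i)%:E <= f i x)%E.
      have Aix := hk i x Akx.
      rewrite leNgt; apply/negP => fx.
      have h1 : (f i x `^ xi <= (s ord0 i)%:E `^ xi)%E.
        by apply: poweR_mono; [exact: ltW | exact: f0 | exact: ltW].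
      have [_ h2 _] := hu' i.
      have := le_trans Aix h1; rewrite poweR_EFin -/(r i).
      by rewrite leNgt h2.
    have HsH := Hext_lb Hmono s0 sfx.
    rewrite /= /G -taut.
    apply: le_trans (poweR_mono (ltW xi0) _ HsH); last by rewrite lee_fin; lra.
    rewrite poweR_EFin lee_fin; apply: ge0_ler_powR; rewrite ?nnegrE; try lra.
  have mU := upc_measurable mf C (Gup t%:E).
  have mA := upc_measurable mf C (uA k).
  apply: sugeno_ge; first by rewrite lte_fin.
  apply: (@le_trans _ _ (m (A k))); last by case: mm => _ _ mmono; exact: mmono.
  have [_ _ h3] := hu' k.
  apply: le_trans (ltW h3); rewrite lee_fin -taut.
  apply: ge0_ler_powR; rewrite ?nnegrE; try lra.
    exact: s0.
  exact: (le_trans (ltW Hs) (Hmin s s0 k)).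
have Sb : ((c `^ xi)%:E <= Sugeno m G)%E.
  by apply: ereal_ge_below; [exact: powR_gt0 | exact: key].
have -> : (H p)%:E = ((c `^ xi)%:E `^ w)%E.
  by rewrite poweR_EFin -powRrM xw powRr1 // ltW.
apply: poweR_mono => //; first exact: ltW.
by rewrite lee_fin powR_ge0.
Qed.

Unset Implicit Arguments.

Theorem corollary3p7 (R : realType) (n : nat) (H : 'rV[R]_n -> R)
  (omega0 xi0 : R) (omega xi : 'I_n -> R) :
  (1 <= n)%N ->
  (forall x : 'rV[R]_n, (forall i, 0 <= x ord0 i) -> 0 <= H x) ->
  {within [set x : 'rV[R]_n | forall i, 0 <= x ord0 i], continuous H} ->
  (forall x y : 'rV[R]_n, (forall i, 0 <= x ord0 i) ->
     (forall i, x ord0 i <= y ord0 i) -> H x <= H y) ->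
  (forall x : 'rV[R]_n, (forall i, 0 <= x ord0 i) ->
     forall i, H x <= x ord0 i) ->
  0 < omega0 -> 0 < xi0 -> (forall i, 0 < omega i) -> (forall i, 0 < xi i) ->
  (forall x : R, 0 <= x -> x `^ (1 / (xi0 * omega0)) <= x) ->
  (forall i (x : R), 0 <= x -> x <= x `^ (1 / (xi i * omega i))) ->
  (forall i (x : R), 0 <= x -> x `^ (omega i / omega0) <= x) ->
  forall (d : measure_display) (T : measurableType d)
    (f : 'I_n -> T -> \bar R) (m : set T -> \bar R),
  (forall i, nnmeasurable (f i)) ->
  comonotone_system f ->
  monotone_measure m ->
  (forall i, (Sugeno m (fun x => (f i x `^ xi i)%E) < +oo)%E) ->
  ((H (\row_i (fine (Sugeno m (fun x => (f i x `^ xi i)%E))) `^ omega i))%:E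
   <= (Sugeno m (fun x => ((Hext H (fun i => f i x)) `^ xi0)%E)) `^ omega0)%E.
Proof.
move=> hn Hge0 Hcont Hmono Hmin Hw0 Hx0 Hwi Hxi h1 h2 h3 d T f m nnf C mm fin.
pose i0 : 'I_n := Ordinal hn.
have nz : omega0 != 0 by rewrite gt_eqF.
have e0 : xi0 * omega0 = 1.
  by move: (expo_le_eq1 h1) => /eqP; rewrite div1r invr_eq1 => /eqP.
have ei i : xi i * omega i = 1.
  by move: (expo_ge_eq1 (h2 i)) => /eqP; rewrite div1r invr_eq1 => /eqP.
have ew i : omega i = omega0.
  by rewrite -[omega i](divfK nz) (expo_le_eq1 (h3 i)) mul1r.
have ex i : xi i = xi0.
  by apply: (mulIf nz); rewrite -{1}(ew i) ei e0.
have Eo : omega = fun _ => omega0 := funext ew.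
have Ex : xi = fun _ => xi0 := funext ex.
subst omega xi.
exact: (main_uniform i0 Hge0 Hcont Hmono Hmin Hw0 Hx0 e0 nnf C mm fin).
Qed.
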